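(* Let $H\in\mathbb{R}^{N\times n}$ with $H^TH$ positive definite, written as $H^TH=P\,\mathrm{diag}\{\lambda_1,\dots,\lambda_n\}P^{-1}$ with $P$ orthogonal and $\lambda_1\ge\lambda_2\ge\dots\ge\lambda_n>0$. Let $c\ge0$ be an integer and, for $\bar\mu\ge\lambda_2$, let $R=P\,\mathrm{diag}\{\lambda_{R,1},\dots,\lambda_{R,n}\}P^{-1}$ with $\lambda_{R,i}=\max\{\bar\mu-\lambda_i,0\}$ (so $R$ and $F(R)$ are symmetric positive semidefinite). Define $F(R)=R(H^TH+R)^{-1}$, $F_{ar}(R)=(H^TH)^{-1}F(R)^{c+1}$, $\mathrm{Cond}(R)=\|H^TH+R\|\,\|(H^TH+R)^{-1}\|$ and $\mathrm{Obj}(R)=\|F_{ar}(R)\|\cdot\mathrm{Cond}(R)$. Then: $\mathrm{Obj}(R)$ is a bounded function of $\bar\mu$ and has a global minimum; for $\bar\mu\ge\lambda_1$, $\mathrm{Cond}(R)$ attains its minimal possible value $1$ (maximal generalizability); and if $\lambda_1\ge\bar\mu\ge\lambda_2$, the largest eigenvalue of $H^TH+R$ equals $\lambda_1$, the largest eigenvalue of $H^TH$.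
   Context: $\|\cdot\|$ is the spectral norm. The paper measures the generalizability of the network by the condition number $\mathrm{Cond}(R)$ of $H^TH+R$: a smaller condition number means better generalizability, and ''maximal generalizability'' means $\mathrm{Cond}(R)$ is minimized. *)

(* Defs.v *)
From HB Require Import structures.
From mathcomp Require Import all_boot all_order all_algebra.
From mathcomp Require Import classical_sets reals.
Set Implicit Arguments. Unset Strict Implicit. Unset Printing Implicit Defensive.
Import Order.TTheory GRing.Theory Num.Theory.
Local Open Scope ring_scope.
Local Open Scope classical_set_scope.

Section Defs.
Variable R : realType.

Definition vnorm {n : nat} (x : 'cV[R]_n) : R :=
  Num.sqrt (\sum_(i < n) x i 0 ^+ 2).

Definition specnorm {m n : nat} (A : 'M[R]_(m, n)) : R :=
  sup [set vnorm (A *m x) | x in [set x : 'cV[R]_n | vnorm x = 1]].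

Definition orthogonal_mx {n : nat} (P : 'M[R]_n) : Prop := P^T *m P = 1%:M.

Definition posdef {n : nat} (A : 'M[R]_n) : Prop :=
  A^T = A /\ forall x : 'cV[R]_n, x != 0 -> 0 < (x^T *m A *m x) 0 0.

Definition Rreg {n : nat} (P : 'M[R]_n) (lam : nat -> R) (mu : R) : 'M[R]_n :=
  P *m diag_mx (\row_(i < n) Num.max (mu - lam i) 0) *m invmx P.

Definition Fmx {n : nat} (HtH Rm : 'M[R]_n) : 'M[R]_n := Rm *m invmx (HtH + Rm).

Definition Far {n : nat} (c : nat) (HtH Rm : 'M[R]_n) : 'M[R]_n :=
  invmx HtH *m (Fmx HtH Rm) ^+ c.+1.

Definition Cond {n : nat} (HtH Rm : 'M[R]_n) : R :=
  specnorm (HtH + Rm) * specnorm (invmx (HtH + Rm)).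

Definition Obj {n : nat} (c : nat) (HtH Rm : 'M[R]_n) : R :=
  specnorm (Far c HtH Rm) * Cond HtH Rm.

Definition largest_eigenvalue {n : nat} (A : 'M[R]_n) (a : R) : Prop :=
  eigenvalue A a /\ forall b, eigenvalue A b -> b <= a.

End Defs.

(* Main.v *)
Require Import Defs.
From HB Require Import structures.
From mathcomp Require Import all_boot all_order all_algebra.
From mathcomp Require Import classical_sets reals.
From mathcomp Require Import boolp topology normedtype derive realfun.
Set Implicit Arguments. Unset Strict Implicit. Unset Printing Implicit Defensive.
Import Order.TTheory GRing.Theory Num.Theory.
Import numFieldNormedType.Exports.
Local Open Scope ring_scope.

Definition Smx (R : realType) (n : nat) (P : 'M[R]_n) (f : 'I_n -> R) : 'M[R]_n :=
  P *m diag_mx (\row_i f i) *m P^T.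

Lemma orth_tr (R : realType) (n : nat) (P : 'M[R]_n) :
  P^T *m P = 1%:M -> P *m P^T = 1%:M.
Proof. exact: mulmx1C. Qed.

Lemma invmx_orth (R : realType) (n : nat) (P : 'M[R]_n) :
  P^T *m P = 1%:M -> invmx P = P^T.
Proof.
move=> hP; have hP' := orth_tr hP.
have [uP _] := mulmx1_unit hP'.
by rewrite -[invmx P]mulmx1 -hP' mulmxA mulVmx // mul1mx.
Qed.

Lemma Smx_ext (R : realType) (n : nat) (P : 'M[R]_n) f g :
  (forall i, f i = g i) -> Smx P f = Smx P g.
Proof.
move=> h; rewrite /Smx; congr (_ *m diag_mx _ *m _).
by apply/matrixP => i j; rewrite !mxE h.
Qed.

Lemma Smx_add (R : realType) (n : nat) (P : 'M[R]_n) f g :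
  Smx P f + Smx P g = Smx P (fun i => f i + g i).
Proof.
rewrite /Smx -mulmxDl -mulmxDr; congr (_ *m _ *m _).
by apply/matrixP => i j; rewrite !mxE -mulrnDl.
Qed.

Lemma Smx_mul (R : realType) (n : nat) (P : 'M[R]_n) f g :
  P^T *m P = 1%:M ->
  Smx P f *m Smx P g = Smx P (fun i => f i * g i).
Proof.
move=> hP; rewrite /Smx !mulmxA -[P *m _ *m P^T *m P]mulmxA hP mulmx1.
rewrite -[P *m _ *m _]mulmxA mulmx_diag; congr (_ *m diag_mx _ *m _).
by apply/matrixP => i j; rewrite !mxE.
Qed.

Lemma Smx1 (R : realType) (n : nat) (P : 'M[R]_n) :
  P^T *m P = 1%:M -> Smx P (fun=> 1) = 1%:M.
Proof.
move=> hP; rewrite /Smx.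
have -> : diag_mx (\row_(i < n) (1 : R)) = 1%:M.
  by apply/matrixP => i j; rewrite !mxE.
by rewrite mulmx1 orth_tr.
Qed.

Lemma Smx_pow (R : realType) (n : nat) (P : 'M[R]_n) f k :
  P^T *m P = 1%:M ->
  Smx P f ^+ k = Smx P (fun i => f i ^+ k).
Proof.
move=> hP; elim: k => [|k IH].
  rewrite expr0; transitivity (Smx P (fun=> 1)); first by rewrite Smx1.
  by apply: Smx_ext => i; rewrite expr0.
rewrite exprS IH.
have -> : Smx P f * Smx P (fun i => f i ^+ k) = Smx P f *m Smx P (fun i => f i ^+ k) by [].
by rewrite Smx_mul //; apply: Smx_ext => i; rewrite exprS.
Qed.

Lemma Smx_inv (R : realType) (n : nat) (P : 'M[R]_n) f :
  P^T *m P = 1%:M -> (forall i, f i != 0) ->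
  invmx (Smx P f) = Smx P (fun i => (f i)^-1).
Proof.
move=> hP hf.
have h1 : Smx P f *m Smx P (fun i => (f i)^-1) = 1%:M.
  rewrite Smx_mul // -(Smx1 hP); apply: Smx_ext => i; by rewrite divff.
have [u _] := mulmx1_unit h1.
by rewrite -[invmx _]mulmx1 -h1 mulmxA mulVmx // mul1mx.
Qed.
Lemma vnorm_ge0 (R : realType) (n : nat) (x : 'cV[R]_n) : 0 <= vnorm x.
Proof. exact: sqrtr_ge0. Qed.

Lemma sumsq_ge0 (R : realType) (n : nat) (x : 'cV[R]_n) : 0 <= \sum_(i < n) x i 0 ^+ 2.
Proof. by apply: sumr_ge0 => i _; rewrite sqr_ge0. Qed.

Lemma trmx_sq (R : realType) (n : nat) (x : 'cV[R]_n) :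
  (x^T *m x) 0 0 = \sum_(i < n) x i 0 ^+ 2.
Proof. by rewrite mxE; apply: eq_bigr => i _; rewrite mxE expr2. Qed.

Lemma vnorm_orth (R : realType) (n : nat) (Q : 'M[R]_n) (y : 'cV[R]_n) :
  Q^T *m Q = 1%:M -> vnorm (Q *m y) = vnorm y.
Proof.
move=> hQ; rewrite /vnorm -!trmx_sq trmx_mul -mulmxA (mulmxA Q^T) hQ mul1mx //.
Qed.

Lemma vnorm_coord (R : realType) (n : nat) (x : 'cV[R]_n) i : `|x i 0| <= vnorm x.
Proof.
rewrite /vnorm -sqrtr_sqr; apply: ler_wsqrtr.
rewrite (bigD1 i) //= lerDl; apply: sumr_ge0 => j _; exact: sqr_ge0.
Qed.

Lemma vnormZ (R : realType) (n : nat) (k : R) (x : 'cV[R]_n) :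
  vnorm (k *: x) = `|k| * vnorm x.
Proof.
rewrite /vnorm -sqrtr_sqr -sqrtrM ?sqr_ge0 //; congr Num.sqrt.
rewrite mulr_sumr; apply: eq_bigr => i _; by rewrite mxE exprMn.
Qed.

Lemma vnorm0 (R : realType) (n : nat) : vnorm (0 : 'cV[R]_n) = 0.
Proof.
rewrite /vnorm big1 ?sqrtr0 // => i _; by rewrite mxE expr0n.
Qed.

Lemma vnorm_le_sum (R : realType) (n : nat) (z : 'cV[R]_n) :
  vnorm z <= \sum_(i < n) `|z i 0|.
Proof.
set S := \sum_(i < n) `|z i 0|.
have S0 : 0 <= S by apply: sumr_ge0.
have hi : forall i, `|z i 0| <= S.
  by move=> i; rewrite /S (bigD1 i) //= lerDl; apply: sumr_ge0.
rewrite /vnorm -(ger0_norm S0) -sqrtr_sqr; apply: ler_wsqrtr.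
rewrite expr2 {2}/S mulr_sumr; apply: ler_sum => i _.
rewrite -real_normK ?num_real // expr2; apply: ler_wpM2r => //.
Qed.

Lemma specnorm_bounded (R : realType) (m n : nat) (A : 'M[R]_(m, n)) :
  has_ubound [set vnorm (A *m x) | x in [set x : 'cV[R]_n | vnorm x = 1]].
Proof.
exists (\sum_(i < m) \sum_(j < n) `|A i j|) => _ [x /= hx <-].
apply: le_trans (vnorm_le_sum _) _; apply: ler_sum => i _.
rewrite mxE; apply: le_trans (ler_norm_sum _ _ _) _; apply: ler_sum => j _.
rewrite normrM -{2}(mulr1 `|A i j|); apply: ler_wpM2l => //.
by rewrite -hx vnorm_coord.
Qed.

Lemma specnorm_ub (R : realType) (m n : nat) (A : 'M[R]_(m, n)) x :
  vnorm (A *m x) <= specnorm A * vnorm x.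
Proof.
have [->|x0] := eqVneq x 0.
  by rewrite mulmx0 vnorm0 vnorm0 mulr0.
have nx : 0 < vnorm x.
  rewrite lt_def vnorm_ge0 andbT; apply/eqP => h.
  move/eqP: x0; apply; apply/matrixP => i j; rewrite (ord1 j) mxE.
  by apply/normr0_eq0/eqP; rewrite eq_le normr_ge0 andbT -h vnorm_coord.
set u := (vnorm x)^-1 *: x.
have hu : vnorm u = 1 by rewrite vnormZ ger0_norm ?invr_ge0 ?vnorm_ge0 // mulVf // gt_eqF.
have hxu : x = vnorm x *: u by rewrite /u scalerA divff ?gt_eqF // scale1r.
rewrite {1}hxu -scalemxAr vnormZ ger0_norm ?vnorm_ge0 // [_ * vnorm x]mulrC.
apply: ler_wpM2l; first exact: vnorm_ge0.
by apply: ub_le_sup; [exact: specnorm_bounded | exists u].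
Qed.

Lemma specnorm_ge0 (R : realType) (m n : nat) (A : 'M[R]_(m, n)) (x : 'cV[R]_n) :
  vnorm x = 1 -> 0 <= specnorm A.
Proof.
move=> hx; apply: le_trans (vnorm_ge0 (A *m x)) _.
by have := specnorm_ub A x; rewrite hx mulr1.
Qed.

Lemma specnorm_eq (R : realType) (m n : nat) (A : 'M[R]_(m, n)) (M : R) (x0 : 'cV[R]_n) :
  vnorm x0 = 1 -> vnorm (A *m x0) = M ->
  (forall x, vnorm x = 1 -> vnorm (A *m x) <= M) -> specnorm A = M.
Proof.
move=> hx0 hM hub; apply/eqP; rewrite eq_le; apply/andP; split.
  apply: ge_sup; first by exists M, x0.
  by move=> _ [x /= hx <-]; apply: hub.
by apply: ub_le_sup; [exact: specnorm_bounded | exists x0].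
Qed.

Lemma diag_apply (R : realType) (n : nat) (f : 'I_n -> R) (y : 'cV[R]_n) i :
  (diag_mx (\row_i f i) *m y) i 0 = f i * y i 0.
Proof. by rewrite mul_diag_mx !mxE. Qed.

Lemma vnorm_diag_le (R : realType) (n : nat) (f : 'I_n -> R) (M : R) (y : 'cV[R]_n) :
  (forall i, `|f i| <= M) -> 0 <= M ->
  vnorm (diag_mx (\row_i f i) *m y) <= M * vnorm y.
Proof.
move=> hf M0; rewrite /vnorm -(ger0_norm M0) -sqrtr_sqr -sqrtrM ?sqr_ge0 //.
apply: ler_wsqrtr; rewrite mulr_sumr; apply: ler_sum => i _.
rewrite diag_apply exprMn; apply: ler_wpM2r; first exact: sqr_ge0.
idtac.
have -> : f i ^+ 2 = `|f i| ^+ 2 by rewrite real_normK ?num_real.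
by rewrite !expr2 ler_pM.
Qed.

Lemma sum_delta (R : realType) (n : nat) (f : 'I_n -> R) k :
  \sum_(i < n) (f i * (delta_mx k 0 : 'cV[R]_n) i 0) ^+ 2 = f k ^+ 2.
Proof.
rewrite (bigD1 k) //= big1 ?addr0; first by rewrite mxE !eqxx mulr1.
by move=> i /negPf hik; rewrite mxE hik /= mulr0 expr0n.
Qed.

Lemma specnorm_Smx (R : realType) (n : nat) (P : 'M[R]_n) (f : 'I_n -> R) (M : R) k :
  P^T *m P = 1%:M -> (forall i, `|f i| <= M) -> `|f k| = M ->
  specnorm (Smx P f) = M.
Proof.
move=> hP hf hk.
have M0 : 0 <= M by rewrite -hk.
have hPt : P^T^T *m P^T = 1%:M by rewrite trmxK orth_tr.
have eq1 : forall x : 'cV[R]_n, Smx P f *m x = P *m (diag_mx (\row_i f i) *m (P^T *m x)).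
  by move=> x; rewrite /Smx !mulmxA.
pose d := (delta_mx k 0 : 'cV[R]_n).
have hd : vnorm d = 1.
  rewrite /vnorm.
  have -> : \sum_(i < n) d i 0 ^+ 2 = \sum_(i < n) (1 * d i 0) ^+ 2.
    by apply: eq_bigr => i _; rewrite mul1r.
  by rewrite sum_delta expr1n sqrtr1.
apply: (@specnorm_eq _ _ _ _ _ (P *m d)).
- by rewrite vnorm_orth.
- rewrite eq1 [P^T *m (P *m d)]mulmxA hP mul1mx vnorm_orth // /vnorm.
  have -> : \sum_(i < n) (diag_mx (\row_i0 f i0) *m d) i 0 ^+ 2 =
            \sum_(i < n) (f i * d i 0) ^+ 2.
    by apply: eq_bigr => i _; rewrite diag_apply.
  by rewrite sum_delta sqrtr_sqr.
- move=> x hx; rewrite eq1 vnorm_orth //.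
  apply: le_trans (vnorm_diag_le _ hf M0) _.
  by rewrite vnorm_orth // hx mulr1.
Qed.

Lemma largest_eig_Smx (R : realType) (n : nat) (P : 'M[R]_n) (f : 'I_n -> R) (M : R) k :
  P^T *m P = 1%:M -> (forall i, f i <= M) -> f k = M ->
  largest_eigenvalue (Smx P f) M.
Proof.
move=> hP hf hk; split.
  apply/eigenvalueP; exists (delta_mx 0 k *m P^T).
    rewrite /Smx !mulmxA -[delta_mx 0 k *m P^T *m P]mulmxA hP mulmx1.
    rewrite scalemxAl; congr (_ *m _).
    apply/matrixP => i j; rewrite mul_mx_diag !mxE (ord1 i) ?eqxx /=.
    by case: eqP => [->|_]; rewrite ?mulr1 ?mul1r ?mulr0 ?mul0r ?hk.
  apply/eqP => h.
  have : (delta_mx 0 k : 'rV[R]_n) *m P^T *m P = 0 by rewrite h mul0mx.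
  rewrite -mulmxA hP mulmx1 => /matrixP /(_ 0 k); rewrite !mxE !eqxx /=.
  by move/eqP; rewrite oner_eq0.
move=> b /eigenvalueP [v hv v0].
set w := v *m P.
have hw : w *m diag_mx (\row_i f i) = b *: w.
  rewrite /w scalemxAl -hv /Smx !mulmxA.
  by rewrite -[v *m P *m diag_mx _ *m P^T *m P]mulmxA hP mulmx1.
have w0 : w != 0.
  apply: contraNneq v0 => h.
  by rewrite -[v]mulmx1 -(orth_tr hP) mulmxA -/w h mul0mx.
clearbody w.
have [i wi] : exists i, w 0 i != 0.
  apply/existsP; move: w0; apply: contraNT; rewrite negb_exists => /forallP h.
  apply/eqP/matrixP => r j; rewrite (ord1 r) [RHS]mxE; have := h j; by rewrite negbK => /eqP.
have : (w *m diag_mx (\row_i f i)) 0 i = (b *: w) 0 i by rewrite hw.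
rewrite mul_mx_diag !mxE mulrC => /(mulIf wi) <-.
exact: hf.
Qed.

Lemma posdef_unit (R : realType) (n : nat) (A : 'M[R]_n) : posdef A -> A \in unitmx.
Proof.
move=> [hs hp]; rewrite unitmxE unitfE; apply/negP => /det0P [v v0 hv].
have hx : A *m v^T = 0 by rewrite -{1}hs -trmx_mul hv trmx0.
have : v^T != 0 by rewrite trmx_eq0.
move/hp; rewrite -mulmxA hx mulmx0 mxE ltxx //.
Qed.

Lemma cond_ge1 (R : realType) (n : nat) (A : 'M[R]_n) : (0 < n)%N -> posdef A ->
  1 <= specnorm A * specnorm (invmx A).
Proof.
move=> n0 hA; have uA := posdef_unit hA.
pose k := Ordinal n0.
pose d := (delta_mx k 0 : 'cV[R]_n).
have hd : vnorm d = 1.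
  rewrite /vnorm.
  have -> : \sum_(i < n) d i 0 ^+ 2 = \sum_(i < n) (1 * d i 0) ^+ 2.
    by apply: eq_bigr => i _; rewrite mul1r.
  by rewrite sum_delta expr1n sqrtr1.
have e : d = A *m (invmx A *m d) by rewrite mulmxA mulmxV // mul1mx.
have h1 := specnorm_ub A (invmx A *m d).
have h2 := specnorm_ub (invmx A) d.
rewrite hd mulr1 in h2.
rewrite -e hd in h1.
apply: le_trans h1 _; apply: ler_wpM2l => //; exact: specnorm_ge0 hd.
Qed.

Lemma addmax (R : realType) (a b : R) : a + Num.max (b - a) 0 = Num.max b a.
Proof.
have [h|h] := leP a b.
  by rewrite max_l ?subr_ge0 // addrC subrK.
by rewrite max_r ?subr_le0 ?(ltW h) // addr0.
Qed.


Lemma compute_all (R : realType) (N n : nat) (H : 'M[R]_(N, n))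
  (P : 'M[R]_n) (lam : nat -> R) (c : nat)
  (hn : (1 < n)%N)
  (hP : P^T *m P = 1%:M)
  (hH : H^T *m H = Smx P (fun i => lam i))
  (hsort : forall i j : nat, (i <= j)%N -> (j < n)%N -> lam j <= lam i)
  (hpos : 0 < lam n.-1) (mu : R) (hmu : lam 1%N <= mu) :
  Cond (H^T *m H) (Rreg P lam mu) = Num.max mu (lam 0%N) / mu /\
  Obj c (H^T *m H) (Rreg P lam mu) =
    (lam n.-1)^-1 * ((mu - lam n.-1) / mu) ^+ c.+1 * (Num.max mu (lam 0%N) / mu).
Proof.
have hl : (n.-1 < n)%N by rewrite ltn_predL; exact: ltnW hn.
have h0 : (0 < n)%N by exact: ltnW hn.
have lampos : forall i : 'I_n, 0 < lam i.
  by move=> i; apply: lt_le_trans hpos _; apply: hsort => //; rewrite -ltnS prednK.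
have lam0 : forall i : 'I_n, lam i <= lam 0%N by move=> i; apply: hsort.
have lam1 : forall i : 'I_n, (0 < i)%N -> lam i <= lam 1%N by move=> i hi; apply: hsort.
set a := lam n.-1.
have a1 : a <= lam 1%N by apply: hsort => //; rewrite -ltnS prednK.
have mu0 : 0 < mu by apply: lt_le_trans hmu; exact: (lampos (Ordinal hn)).
have hR : Rreg P lam mu = Smx P (fun i => Num.max (mu - lam i) 0).
  by rewrite /Rreg invmx_orth.
set r := fun i : 'I_n => Num.max (mu - lam i) 0.
set m := fun i : 'I_n => Num.max mu (lam i).
have hm : H^T *m H + Rreg P lam mu = Smx P m.
  by rewrite hH hR Smx_add; apply: Smx_ext => i; rewrite addmax.
have mge : forall i, mu <= m i by move=> i; rewrite /m le_max lexx.
have mpos : forall i, 0 < m i by move=> i; exact: lt_le_trans mu0 (mge i).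
have hinv : invmx (Smx P m) = Smx P (fun i => (m i)^-1).
  by apply: Smx_inv => // i; rewrite gt_eqF.
have hC : Cond (H^T *m H) (Rreg P lam mu) = Num.max mu (lam 0%N) / mu.
  rewrite /Cond hm hinv.
  rewrite (@specnorm_Smx _ _ _ _ (Num.max mu (lam 0%N)) (Ordinal h0)) //; last first.
  - by rewrite ger0_norm // ltW.
  - move=> i; rewrite ger0_norm ?(ltW (mpos i)) // /m ge_max le_max lexx /= le_max lam0 orbT.
    by [].
  congr (_ * _); rewrite (@specnorm_Smx _ _ _ _ mu^-1 (Ordinal hn)) //.
  - move=> i; rewrite ger0_norm ?invr_ge0 ?(ltW (mpos i)) //.
    by rewrite lef_pV2 ?posrE.
  - by rewrite ger0_norm ?invr_ge0 ?(ltW (mpos _)) // /m /= max_l.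
split => //.
rewrite /Obj hC; congr (_ * _).
rewrite /Far /Fmx hm hinv hR hH Smx_inv //; last by move=> i; rewrite gt_eqF.
rewrite Smx_mul // Smx_pow // Smx_mul //.
apply: (@specnorm_Smx _ _ _ _ _ (Ordinal hl)) => //; last first.
  rewrite /= /r /m max_l ?subr_ge0 ?(le_trans a1) // max_l ?(le_trans a1) //.
  rewrite ger0_norm // mulr_ge0 ?invr_ge0 ?(ltW hpos) // exprn_ge0 // mulr_ge0 ?invr_ge0 ?(ltW mu0) //.
  by rewrite subr_ge0 (le_trans a1).
move=> i.
have gi0 : 0 <= (lam i)^-1 * (r i * (m i)^-1) ^+ c.+1.
  rewrite mulr_ge0 ?invr_ge0 ?(ltW (lampos i)) // exprn_ge0 // mulr_ge0 ?invr_ge0 ?(ltW (mpos i)) //.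
  by rewrite /r le_max lexx orbT.
rewrite ger0_norm //.
have ai : a <= lam i by apply: hsort => //; rewrite -ltnS prednK.
have [hi|hi] := leP (lam i) mu.
  rewrite /r /m max_l ?subr_ge0 // max_l //.
  apply: ler_pM; rewrite ?invr_ge0 ?(ltW (lampos i)) //.
  - by rewrite exprn_ge0 // mulr_ge0 ?invr_ge0 ?(ltW mu0) // subr_ge0.
  - by rewrite lef_pV2 ?posrE ?hpos ?lampos.
  apply: lerXn2r; rewrite ?nnegrE ?mulr_ge0 ?invr_ge0 ?(ltW mu0) ?subr_ge0 ?(le_trans a1) //.
  by rewrite ler_wpM2r ?invr_ge0 ?(ltW mu0) // lerB.
rewrite /r max_r ?subr_le0 ?(ltW hi) // mul0r expr0n mulr0.
rewrite mulr_ge0 ?invr_ge0 ?(ltW hpos) // exprn_ge0 // mulr_ge0 ?invr_ge0 ?(ltW mu0) //.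
by rewrite subr_ge0 (le_trans a1).
Qed.

Lemma evt_psi (R : realType) (a L0 L1 : R) (c : nat) : 0 < L1 -> L1 <= L0 ->
  exists2 m, m \in `[L1, L0] & forall t, t \in `[L1, L0] ->
    a^-1 * ((m - a) / m) ^+ c.+1 * (L0 / m) <= a^-1 * ((t - a) / t) ^+ c.+1 * (L0 / t).
Proof.
move=> L1p L10.
apply: (EVT_min (f := fun x => a^-1 * ((x - a) / x) ^+ c.+1 * (L0 / x))) => //.
apply: continuous_in_subspaceT => x.
rewrite inE /= in_itv /= => /andP [hx _].
have x0 : x != 0 by rewrite gt_eqF // (lt_le_trans L1p hx).
have cinv : {for x, continuous (fun y : R => y^-1)}.
  by apply: continuousV => //; exact: cvg_id.
have cid : {for x, continuous (fun y : R => y)} by exact: cvg_id.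
have cst : forall k : R, {for x, continuous (fun y : R => k)} by move=> k; apply: cst_continuous.
have h1 : {for x, continuous (fun y : R => (y - a) / y)}.
  exact: (continuousM (s := fun y => y - a) (t := fun y => y^-1) (continuousB cid (cst a)) cinv).
have h2 : {for x, continuous (fun y : R => ((y - a) / y) ^+ c.+1)}.
  have hc := @exprn_continuous R c.+1 ((x - a) / x); exact: (continuous_comp h1 hc).
have h3 : {for x, continuous (fun y : R => a^-1 * ((y - a) / y) ^+ c.+1)}.
  exact: (continuousM (s := fun y => a^-1) (cst _) h2).
exact: (continuousM h3 (continuousM (s := fun y => L0) (cst _) cinv)).
Qed.

Theorem proposition2 (R : realType) (N n : nat) (H : 'M[R]_(N, n))
  (P : 'M[R]_n) (lam : nat -> R) (c : nat)
  (hn : (1 < n)%N)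
  (hpd : posdef (H^T *m H))
  (hP : orthogonal_mx P)
  (hdec : H^T *m H = P *m diag_mx (\row_(i < n) lam i) *m invmx P)
  (hsort : forall i j : nat, (i <= j)%N -> (j < n)%N -> lam j <= lam i)
  (hpos : 0 < lam n.-1) :
  (* Obj is bounded on mu >= lam_2 and attains a global minimum there *)
  ((exists B : R, forall mu, lam 1%N <= mu ->
       `|Obj c (H^T *m H) (Rreg P lam mu)| <= B) /\
   (exists mu0, lam 1%N <= mu0 /\
      forall mu, lam 1%N <= mu ->
        Obj c (H^T *m H) (Rreg P lam mu0) <= Obj c (H^T *m H) (Rreg P lam mu)))
  /\
  (* mu >= lam_1 : Cond(R) = 1, its minimal possible value *)
  ((forall mu, lam 0%N <= mu -> Cond (H^T *m H) (Rreg P lam mu) = 1) /\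
   (forall Rm : 'M[R]_n, posdef (H^T *m H + Rm) -> 1 <= Cond (H^T *m H) Rm))
  /\
  (* lam_1 >= mu >= lam_2 : the largest eigenvalue of H^T H + R is lam_1 *)
  (forall mu, lam 1%N <= mu <= lam 0%N ->
     largest_eigenvalue (H^T *m H) (lam 0%N) /\
     largest_eigenvalue (H^T *m H + Rreg P lam mu) (lam 0%N)).
Proof.
have hP' : P^T *m P = 1%:M := hP.
have hH : H^T *m H = Smx P (fun i => lam i) by rewrite hdec invmx_orth.
have hl : (n.-1 < n)%N by rewrite ltn_predL; exact: ltnW hn.
have h0 : (0 < n)%N by exact: ltnW hn.
have lampos : forall i : 'I_n, 0 < lam i.
  by move=> i; apply: lt_le_trans hpos _; apply: hsort => //; rewrite -ltnS prednK.
have lam0 : forall i : 'I_n, lam i <= lam 0%N by move=> i; apply: hsort.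
have a1 : lam n.-1 <= lam 1%N by apply: hsort => //; rewrite -ltnS prednK.
have l1pos : 0 < lam 1%N := lampos (Ordinal hn).
have l10 : lam 1%N <= lam 0%N := lam0 (Ordinal hn).
have l0pos : 0 < lam 0%N := lt_le_trans l1pos l10.
have CA := fun mu hmu => @compute_all R N n H P lam c hn hP' hH hsort hpos mu hmu.
set a := lam n.-1 in CA a1 hpos *.
have X0 : forall t, lam 1%N <= t -> 0 <= (t - a) / t.
  move=> t ht; rewrite mulr_ge0 ?invr_ge0 ?subr_ge0 ?(le_trans a1) //.
  exact: ltW (lt_le_trans l1pos ht).
have phi0 : forall t, lam 1%N <= t ->
    0 <= a^-1 * ((t - a) / t) ^+ c.+1 * (Num.max t (lam 0%N) / t).
  move=> t ht; have t0 : 0 < t := lt_le_trans l1pos ht.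
  rewrite mulr_ge0 // ?mulr_ge0 ?invr_ge0 ?(ltW hpos) ?exprn_ge0 ?X0 ?(ltW t0) //.
  by rewrite le_max (ltW l0pos) orbT.
split; [split|split; [split|]].
- exists (a^-1 * (lam 0%N / lam 1%N)) => mu hmu.
  have mu0 : 0 < mu := lt_le_trans l1pos hmu.
  have [_ ->] := CA mu hmu; rewrite ger0_norm ?phi0 // -mulrA ler_wpM2l ?invr_ge0 ?(ltW hpos) //.
  rewrite -[_ / lam 1%N]mul1r; apply: ler_pM; rewrite ?exprn_ge0 ?X0 //.
  + by rewrite mulr_ge0 ?invr_ge0 ?(ltW mu0) // le_max (ltW l0pos) orbT.
  + apply: exprn_ile1; first exact: X0.
    rewrite ler_pdivrMr // mul1r lerBlDr lerDl; exact: ltW.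
  have [hm|hm] := leP mu (lam 0%N).
    by rewrite ler_wpM2l ?(ltW l0pos) // lef_pV2 ?posrE.
  by rewrite divff ?gt_eqF // ler_pdivlMr // mul1r.
- have [m0 hm0 hmin] := @evt_psi R a (lam 0%N) (lam 1%N) c l1pos l10.
  move: hm0; rewrite in_itv /= => /andP [m01 m02].
  exists m0; split => // mu hmu.
  rewrite (CA m0 m01).2 (CA mu hmu).2 (max_r m02).
  have [hm|hm] := leP mu (lam 0%N).
    by apply: hmin; rewrite in_itv /= hmu hm.
  apply: le_trans (hmin (lam 0%N) _) _; first by rewrite in_itv /= l10 lexx.
  have mu0 : 0 < mu := lt_le_trans l0pos (ltW hm).
  rewrite !divff ?gt_eqF // !mulr1; apply: ler_wpM2l; first by rewrite invr_ge0 ltW.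
  apply: lerXn2r; rewrite ?nnegrE ?X0 //.
  rewrite !mulrBl !divff ?gt_eqF // lerD2l lerN2 ler_wpM2l ?(ltW hpos) //.
  by rewrite lef_pV2 ?posrE // ltW.
- move=> mu hmu; have hmu1 := le_trans l10 hmu.
  by rewrite (CA mu hmu1).1 max_l // divff // gt_eqF // (lt_le_trans l0pos).
- move=> Rm hpd'; exact: cond_ge1 h0 hpd'.
- move=> mu /andP [hmu1 hmu0]; split.
    rewrite hH; apply: (@largest_eig_Smx _ _ _ _ _ (Ordinal h0)) => //.
  rewrite hH /Rreg invmx_orth // Smx_add.
  apply: (@largest_eig_Smx _ _ _ _ _ (Ordinal h0)) => //=.
    by move=> i; rewrite addmax ge_max hmu0 lam0.
  by rewrite addmax max_r.
Qed.
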